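(* Let $(\mathcal A;\mathcal E)$ be an exact category with exact coproducts. Then the coproduct, in the arrow category with its exact structure $\mathrm{Arr}(\mathcal E)$, of any set of ME-conflations of arrows is an ME-conflation.
   Context: An exact category $(\mathcal A;\mathcal E)$ is an additive category with a class of conflations satisfying the Quillen–Keller axioms; it has exact coproducts if set-indexed coproducts exist and coproducts of conflations are conflations. The arrow category $\mathrm{Arr}(\mathcal A)$ has as objects the morphisms $a:A_0\to A_1$ of $\mathcal A$ and as morphisms $a\to b$ the pairs $(f_0,f_1)$ with $bf_0=f_1a$. Its exact structure $\mathrm{Arr}(\mathcal E)$ consists of the sequences $b\to c\to a$ given by a morphism of conflations from $B_0\to C_0\to A_0$ to $B_1\to C_1\to A_1$ with vertical components $b,c,a$. Such a conflation of arrows is ME (mono-epi) if there is a conflation $B_0\to C\to A_1$ and a factorization $c=c_2c_1$ such that $(1_{B_0},c_1,a)$ is a morphism of conflations from $B_0\to C_0\to A_0$ to $B_0\to C\to A_1$ and $(b,c_2,1_{A_1})$ is a morphism of conflations from $B_0\to C\to A_1$ to $B_1\to C_1\to A_1$. *)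

(* Defs.v *)
From HB Require Import structures.
From mathcomp Require Import all_boot all_algebra.
Set Implicit Arguments. Unset Strict Implicit. Unset Printing Implicit Defensive.
Import GRing.Theory.
Local Open Scope ring_scope.

Record AddCat := {
  obj :> Type;
  hom : obj -> obj -> zmodType;
  comp : forall a b c : obj, hom b c -> hom a b -> hom a c;
  idm : forall a : obj, hom a a;
  compA : forall a b c d (h : hom c d) (g : hom b c) (f : hom a b),
      comp h (comp g f) = comp (comp h g) f;
  comp1m : forall a b (f : hom a b), comp (idm b) f = f;
  compm1 : forall a b (f : hom a b), comp f (idm a) = f;
  compDl : forall a b c (g g' : hom b c) (f : hom a b),
      comp (g + g') f = comp g f + comp g' f;
  compDr : forall a b c (g : hom b c) (f f' : hom a b),
      comp g (f + f') = comp g f + comp g f';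
  has_zero_object : exists z : obj,
      (forall a (f : hom a z), f = 0) /\ (forall a (f : hom z a), f = 0);
  has_biproducts : forall a b : obj, exists (c : obj) (i1 : hom a c) (i2 : hom b c)
      (p1 : hom c a) (p2 : hom c b),
      [/\ comp p1 i1 = idm a, comp p2 i2 = idm b, comp p1 i2 = 0,
          comp p2 i1 = 0 & comp i1 p1 + comp i2 p2 = idm c]
}.

Arguments comp {_ _ _ _}.
Arguments idm {_}.
Arguments hom {_}.

Section Exact.
Variable C : AddCat.

Definition is_iso (a b : C) (f : hom a b) : Prop :=
  exists g : hom b a, comp g f = idm a /\ comp f g = idm b.

Definition kernel_cokernel_pair (a b c : C) (i : hom a b) (d : hom b c) : Prop :=
  [/\ comp d i = 0,
      (forall (x : C) (f : hom x b), comp d f = 0 ->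
         exists g : hom x a, comp i g = f /\ forall g', comp i g' = f -> g' = g)
    & (forall (y : C) (f : hom b y), comp f i = 0 ->
         exists g : hom c y, comp g d = f /\ forall g', comp g' d = f -> g' = g)].

Definition seq_class := forall a b c : C, hom a b -> hom b c -> Prop.

Section ExactDefs.
Variable E : seq_class.

Definition inflation (a b : C) (i : hom a b) := exists (c : C) (d : hom b c), E i d.
Definition deflation (b c : C) (d : hom b c) := exists (a : C) (i : hom a b), E i d.

Definition is_pushout (a b a' b' : C) (i : hom a b) (f : hom a a')
    (i' : hom a' b') (f' : hom b b') : Prop :=
  comp f' i = comp i' f /\
  forall (x : C) (g : hom b x) (h : hom a' x), comp g i = comp h f ->
    exists u : hom b' x, (comp u f' = g /\ comp u i' = h) /\
      forall u', comp u' f' = g -> comp u' i' = h -> u' = u.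

Definition is_pullback (b c b' c' : C) (d : hom b c) (f : hom c' c)
    (d' : hom b' c') (f' : hom b' b) : Prop :=
  comp d f' = comp f d' /\
  forall (x : C) (g : hom x b) (h : hom x c'), comp d g = comp f h ->
    exists u : hom x b', (comp f' u = g /\ comp d' u = h) /\
      forall u', comp f' u' = g -> comp d' u' = h -> u' = u.

Definition is_exact_structure : Prop :=
  [/\
      (forall a b c (i : hom a b) (d : hom b c), E i d -> kernel_cokernel_pair i d),
      (forall a b c a' b' c' (i : hom a b) (d : hom b c) (i' : hom a' b') (d' : hom b' c')
              (x : hom a a') (y : hom b b') (z : hom c c'),
          E i d -> is_iso x -> is_iso y -> is_iso z ->
          comp y i = comp i' x -> comp z d = comp d' y -> E i' d'),
      (forall a : C, inflation (idm a)) /\ (forall a : C, deflation (idm a)),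
      (forall a b c (f : hom a b) (g : hom b c),
          inflation f -> inflation g -> inflation (comp g f)) /\
      (forall a b c (f : hom a b) (g : hom b c),
          deflation f -> deflation g -> deflation (comp g f))
    &
      (forall a b a' (i : hom a b) (f : hom a a'), inflation i ->
          exists (b' : C) (i' : hom a' b') (f' : hom b b'),
            is_pushout i f i' f' /\ inflation i') /\
      (forall b c c' (d : hom b c) (f : hom c' c), deflation d ->
          exists (b' : C) (d' : hom b' c') (f' : hom b' b),
            is_pullback d f d' f' /\ deflation d')].

Definition is_coproduct (I : Type) (A : I -> C) (S : C) (inj : forall i, hom (A i) S) :=
  forall (x : C) (f : forall i, hom (A i) x),
    exists u : hom S x, (forall i, comp u (inj i) = f i) /\
      forall u', (forall i, comp u' (inj i) = f i) -> u' = u.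

Definition has_exact_coproducts : Prop :=
  (forall (I : Type) (A : I -> C), exists (S : C) (inj : forall i, hom (A i) S),
      is_coproduct inj) /\
  (forall (I : Type) (A B Cc : I -> C) (f : forall i, hom (A i) (B i))
          (g : forall i, hom (B i) (Cc i)),
     (forall i, E (f i) (g i)) ->
     forall (SA SB SC : C) (jA : forall i, hom (A i) SA) (jB : forall i, hom (B i) SB)
            (jC : forall i, hom (Cc i) SC) (F : hom SA SB) (G : hom SB SC),
       is_coproduct jA -> is_coproduct jB -> is_coproduct jC ->
       (forall i, comp F (jA i) = comp (jB i) (f i)) ->
       (forall i, comp G (jB i) = comp (jC i) (g i)) ->
       E F G).

Record arrow := Arrow { src : C; tgt : C; amor : hom src tgt }.

Definition arr_hom (x y : arrow) := (hom (src x) (src y) * hom (tgt x) (tgt y))%type.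
Definition is_arr_hom (x y : arrow) (f : arr_hom x y) : Prop :=
  comp (amor y) f.1 = comp f.2 (amor x).
Definition arr_comp (x y z : arrow) (g : arr_hom y z) (f : arr_hom x y) : arr_hom x z :=
  (comp g.1 f.1, comp g.2 f.2).

(* Arr(E)-conflation b --f--> c --g--> a: a morphism of conflations
   (B0 -> C0 -> A0) => (B1 -> C1 -> A1) with vertical components b, c, a. *)
Definition arr_conflation (b c a : arrow) (f : arr_hom b c) (g : arr_hom c a) : Prop :=
  [/\ is_arr_hom f, is_arr_hom g, E f.1 g.1 & E f.2 g.2].

Definition ME_conflation (b c a : arrow) (f : arr_hom b c) (g : arr_hom c a) : Prop :=
  arr_conflation f g /\
  exists (Cm : C) (x : hom (src b) Cm) (y : hom Cm (tgt a))
         (c1 : hom (src c) Cm) (c2 : hom Cm (tgt c)),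
    [/\ E x y, amor c = comp c2 c1,
        (* (1_{B0}, c1, a) is a morphism of conflations *)
        comp x (idm (src b)) = comp c1 f.1 /\ comp y c1 = comp (amor a) g.1
      & (* (b, c2, 1_{A1}) is a morphism of conflations *)
        comp f.2 (amor b) = comp c2 x /\ comp g.2 c2 = comp (idm (tgt a)) y].

Definition is_arr_coproduct (I : Type) (A : I -> arrow) (S : arrow)
    (inj : forall i, arr_hom (A i) S) : Prop :=
  (forall i, is_arr_hom (inj i)) /\
  forall (x : arrow) (f : forall i, arr_hom (A i) x), (forall i, is_arr_hom (f i)) ->
    exists u : arr_hom S x, is_arr_hom u /\ (forall i, arr_comp u (inj i) = f i) /\
      forall u', is_arr_hom u' -> (forall i, arr_comp u' (inj i) = f i) -> u' = u.

End ExactDefs.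
End Exact.

(* Main.v *)
Require Import Defs.
From HB Require Import structures.
From mathcomp Require Import all_boot all_algebra.
From Stdlib Require Import ClassicalEpsilon.
Set Implicit Arguments. Unset Strict Implicit. Unset Printing Implicit Defensive.
Import GRing.Theory.
Local Open Scope ring_scope.

Lemma comp0l (C : AddCat) (a b c : C) (f : Defs.hom a b) : Defs.comp (0 : Defs.hom b c) f = 0.
Proof.
have h := compDl (0 : Defs.hom b c) 0 f.
rewrite addr0 in h; apply: (@addrI _ (Defs.comp (0 : Defs.hom b c) f)).
by rewrite addr0 -h.
Qed.

Lemma cop_uniq (C : AddCat) (I : Type) (A : I -> C) (S : C) (inj : forall i, Defs.hom (A i) S)
  (H : is_coproduct inj) (x : C) (u v : Defs.hom S x) :
  (forall i, Defs.comp u (inj i) = Defs.comp v (inj i)) -> u = v.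
Proof.
move=> e; have [w [_ hw]] := H x (fun i => Defs.comp v (inj i)).
by rewrite (hw u e) (hw v (fun i => erefl)).
Qed.

Lemma arr_cop_src (C : AddCat) (I : Type) (A : I -> arrow C) (S : arrow C)
  (inj : forall i, arr_hom (A i) S) :
  is_arr_coproduct inj -> is_coproduct (fun i => (inj i).1).
Proof.
move=> [Hh Hu] x fam.
have := Hu (@Arrow C x x 0) (fun i => (fam i, 0)).
case.
  by move=> i; rewrite /is_arr_hom /= !comp0l.
move=> u [hu [hc huniq]].
exists u.1; split.
  by move=> i; exact: (f_equal fst (hc i)).
move=> u' hu'.
have h1 : is_arr_hom (x := S) (y := @Arrow C x x 0) (u', 0) by rewrite /is_arr_hom /= !comp0l.
have h2 : forall i, arr_comp ((u', 0) : arr_hom S (@Arrow C x x 0)) (inj i) = (fam i, 0) by move=> i; rewrite /arr_comp /= hu' comp0l.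
exact: (f_equal fst (huniq _ h1 h2)).
Qed.

Lemma arr_cop_tgt (C : AddCat) (I : Type) (A : I -> arrow C) (S : arrow C)
  (inj : forall i, arr_hom (A i) S) :
  is_arr_coproduct inj -> is_coproduct (fun i => (inj i).2).
Proof.
move=> [Hh Hu] x fam.
have := Hu (@Arrow C x x (Defs.idm x)) (fun i => (Defs.comp (fam i) (amor (A i)), fam i)).
case.
  by move=> i; rewrite /is_arr_hom /= Defs.comp1m.
move=> u [hu [hc huniq]].
exists u.2; split.
  by move=> i; exact: (f_equal snd (hc i)).
move=> u' hu'.
have h1 : is_arr_hom (x := S) (y := @Arrow C x x (Defs.idm x)) (Defs.comp u' (amor S), u') by rewrite /is_arr_hom /= Defs.comp1m.
have h2 : forall i, arr_comp ((Defs.comp u' (amor S), u') : arr_hom S (@Arrow C x x (Defs.idm x))) (inj i) = (Defs.comp (fam i) (amor (A i)), fam i).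
  move=> i; rewrite /arr_comp /= hu' -Defs.compA.
  by have := Hh i; rewrite /is_arr_hom => ->; rewrite Defs.compA hu'.
exact: (f_equal snd (huniq _ h1 h2)).
Qed.

Theorem proposition5p3 (C : AddCat) (E : seq_class C)
  (HE : is_exact_structure E) (Hcop : has_exact_coproducts E)
  (I : Type) (Bs Cs As : I -> arrow C)
  (f : forall i, arr_hom (Bs i) (Cs i)) (g : forall i, arr_hom (Cs i) (As i))
  (HME : forall i, ME_conflation E (f i) (g i))
  (SB SC SA : arrow C)
  (jB : forall i, arr_hom (Bs i) SB) (jC : forall i, arr_hom (Cs i) SC)
  (jA : forall i, arr_hom (As i) SA)
  (F : arr_hom SB SC) (G : arr_hom SC SA) :
  is_arr_coproduct jB -> is_arr_coproduct jC -> is_arr_coproduct jA ->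
  is_arr_hom F -> is_arr_hom G ->
  (forall i, arr_comp F (jB i) = arr_comp (jC i) (f i)) ->
  (forall i, arr_comp G (jC i) = arr_comp (jA i) (g i)) ->
  ME_conflation E F G.
Proof.
move=> cB cC cA hF hG eF eG.
have [Hcop1 Hcop2] := Hcop.
have sB := arr_cop_src cB; have tB := arr_cop_tgt cB.
have sC := arr_cop_src cC; have tC := arr_cop_tgt cC.
have sA := arr_cop_src cA; have tA := arr_cop_tgt cA.
have eF1 i : Defs.comp F.1 (jB i).1 = Defs.comp (jC i).1 (f i).1 := f_equal fst (eF i).
have eF2 i : Defs.comp F.2 (jB i).2 = Defs.comp (jC i).2 (f i).2 := f_equal snd (eF i).
have eG1 i : Defs.comp G.1 (jC i).1 = Defs.comp (jA i).1 (g i).1 := f_equal fst (eG i).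
have eG2 i : Defs.comp G.2 (jC i).2 = Defs.comp (jA i).2 (g i).2 := f_equal snd (eG i).
split.
  split => //.
    apply: (Hcop2 I _ _ _ (fun i => (f i).1) (fun i => (g i).1) _ _ _ _
      (fun i => (jB i).1) (fun i => (jC i).1) (fun i => (jA i).1)) => //.
    by move=> i; have [[_ _ ? _] _] := HME i.
  apply: (Hcop2 I _ _ _ (fun i => (f i).2) (fun i => (g i).2) _ _ _ _
    (fun i => (jB i).2) (fun i => (jC i).2) (fun i => (jA i).2)) => //.
  by move=> i; have [[_ _ _ ?] _] := HME i.
have D i : {Cm : C & {x : Defs.hom (src (Bs i)) Cm & {y : Defs.hom Cm (tgt (As i)) &
   {c1 : Defs.hom (src (Cs i)) Cm & {c2 : Defs.hom Cm (tgt (Cs i)) |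
    [/\ E _ _ _ x y, amor (Cs i) = Defs.comp c2 c1,
        Defs.comp x (Defs.idm (src (Bs i))) = Defs.comp c1 (f i).1 /\ Defs.comp y c1 = Defs.comp (amor (As i)) (g i).1
      & Defs.comp (f i).2 (amor (Bs i)) = Defs.comp c2 x /\ Defs.comp (g i).2 c2 = Defs.comp (Defs.idm (tgt (As i))) y]}}}}}.
  have [_ Hex] := HME i.
  case/constructive_indefinite_description: Hex => Cm Hex; exists Cm.
  case/constructive_indefinite_description: Hex => x Hex; exists x.
  case/constructive_indefinite_description: Hex => y Hex; exists y.
  case/constructive_indefinite_description: Hex => c1 Hex; exists c1.
  case/constructive_indefinite_description: Hex => c2 Hex; exists c2.
  exact: Hex.
have [Cm [x [y [c1 [c2 P]]]]] : exists (Cm : I -> C)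
   (x : forall i, Defs.hom (src (Bs i)) (Cm i)) (y : forall i, Defs.hom (Cm i) (tgt (As i)))
   (c1 : forall i, Defs.hom (src (Cs i)) (Cm i)) (c2 : forall i, Defs.hom (Cm i) (tgt (Cs i))),
   forall i, [/\ E _ _ _ (x i) (y i), amor (Cs i) = Defs.comp (c2 i) (c1 i),
        Defs.comp (x i) (Defs.idm (src (Bs i))) = Defs.comp (c1 i) (f i).1 /\ Defs.comp (y i) (c1 i) = Defs.comp (amor (As i)) (g i).1
      & Defs.comp (f i).2 (amor (Bs i)) = Defs.comp (c2 i) (x i) /\ Defs.comp (g i).2 (c2 i) = Defs.comp (Defs.idm (tgt (As i))) (y i)].
  exists (fun i => projT1 (D i)), (fun i => projT1 (projT2 (D i))),
    (fun i => projT1 (projT2 (projT2 (D i)))), (fun i => projT1 (projT2 (projT2 (projT2 (D i))))),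
    (fun i => proj1_sig (projT2 (projT2 (projT2 (projT2 (D i)))))).
  move=> i; exact: (proj2_sig (projT2 (projT2 (projT2 (projT2 (D i)))))).
clear D.
have [SM [jM cM]] := Hcop1 I Cm.
have [X [HX _]] := sB SM (fun i => Defs.comp (jM i) (x i)).
have [Y [HY _]] := cM (tgt SA) (fun i => Defs.comp (jA i).2 (y i)).
have [C1 [HC1 _]] := sC SM (fun i => Defs.comp (jM i) (c1 i)).
have [C2 [HC2 _]] := cM (tgt SC) (fun i => Defs.comp (jC i).2 (c2 i)).
exists SM, X, Y, C1, C2; split.
- apply: (Hcop2 I _ _ _ x y _ _ _ _ (fun i => (jB i).1) jM (fun i => (jA i).2)) => //.
  by move=> i; have [? _ _ _] := P i.
- apply: (cop_uniq sC) => i /=.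
  have [_ Ha _ _] := P i.
  have := (proj1 cC) i; rewrite /is_arr_hom => ->.
  by rewrite -Defs.compA HC1 Defs.compA HC2 -Defs.compA -Ha.
- split.
  + apply: (cop_uniq sB) => i /=.
    have [_ _ [Hb _] _] := P i.
    by rewrite Defs.compm1 HX -Defs.compA eF1 Defs.compA HC1 -Defs.compA -Hb Defs.compm1.
  + apply: (cop_uniq sC) => i /=.
    have [_ _ [_ Hb] _] := P i.
    rewrite -Defs.compA HC1 Defs.compA HY -Defs.compA Hb -!Defs.compA eG1 !Defs.compA.
    by have := (proj1 cA) i; rewrite /is_arr_hom => ->.
- split.
  + apply: (cop_uniq sB) => i /=.
    have [_ _ _ [Hb _]] := P i.
    rewrite -!Defs.compA HX [in RHS]Defs.compA HC2 -Defs.compA -Hb.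
    have := (proj1 cB) i; rewrite /is_arr_hom => ->.
    by rewrite Defs.compA eF2 -Defs.compA.
  + apply: (cop_uniq cM) => i /=.
    have [_ _ _ [_ Hb]] := P i.
    rewrite -!Defs.compA HC2 Defs.compA eG2 -Defs.compA Hb Defs.comp1m Defs.comp1m HY //.
Qed.
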